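(* Let $k[X,Y]$ be the polynomial ring over a field $k$, let $\ell\ge 3$, and set $R = k[X,Y]/(Y^\ell)$, with $x,y$ the images of $X,Y$ in $R$; let $D = k[x] \subseteq R$. For each integer $n>0$ let $z_n = y/x^n \in \mathrm{Q}(R)$ and $S_n = D[z_n]$. Then $R \subseteq S_n \subseteq \overline R$, and the strict closure $R^*$ of $R$ in $S_n$ equals $$R^* = R + D\frac{y^2}{x^n} + D\frac{y^3}{x^{2n}} + \cdots + D\frac{y^{\ell-1}}{x^{(\ell-2)n}}.$$
   Context: $\mathrm{Q}(R)$ denotes the total ring of fractions of $R$ (here $x$ is a non-zerodivisor of $R$) and $\overline R$ the integral closure of $R$ in $\mathrm{Q}(R)$. For an extension of commutative rings $R \subseteq S$, the strict closure of $R$ in $S$ is $R^* = \{\alpha \in S \mid \alpha\otimes 1 = 1\otimes \alpha \text{ in } S\otimes_R S\}$. *)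

(* Defs.v *)
From HB Require Import structures.
From mathcomp Require Import all_boot all_order all_algebra.
Set Implicit Arguments. Unset Strict Implicit. Unset Printing Implicit Defensive.
Import Order.TTheory GRing.Theory Num.Theory.
Local Open Scope ring_scope.

(* Evaluation of a bivariate polynomial P in k[X][Y] ({poly {poly k}}, the
   outer variable being Y) at the point (a, b) of a commutative k-algebra A. *)
Definition evalXY (k : fieldType) (A : comUnitAlgType k) (a b : A)
    (P : {poly {poly k}}) : A :=
  (map_poly (fun p : {poly k} => (map_poly (in_alg A) p).[a]) P).[b].

(* k[a][b] : the image of k[X,Y] under X |-> a, Y |-> b. *)
Definition gen2 (k : fieldType) (A : comUnitAlgType k) (a b : A) (q : A) : Prop :=
  exists P : {poly {poly k}}, evalXY a b P = q.

Definition gen1 (k : fieldType) (A : comUnitAlgType k) (a : A) (q : A) : Prop :=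
  exists p : {poly k}, (map_poly (in_alg A) p).[a] = q.

Definition nzd_in (A : comUnitRingType) (R : A -> Prop) (s : A) : Prop :=
  R s /\ forall r, R r -> s * r = 0 -> r = 0.

Definition is_total_quotient_ring (A : comUnitRingType) (R : A -> Prop) : Prop :=
  (forall s, nzd_in R s -> s \is a GRing.unit) /\
  (forall q, exists r s, R r /\ nzd_in R s /\ q = r / s).

Definition integral_over (A : comUnitRingType) (R : A -> Prop) (alpha : A) : Prop :=
  exists p : {poly A}, p \is monic /\ (forall i, R p`_i) /\ root p alpha.

Definition rhom_on (A : comUnitRingType) (S : A -> Prop) (T : comPzRingType)
    (f : A -> T) : Prop :=
  f 1 = 1 /\
  forall a b, S a -> S b -> f (a + b) = f a + f b /\ f (a * b) = f a * f b.

(* Strict closure of R in S:  alpha (x) 1 = 1 (x) alpha in S (x)_R S.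
   S (x)_R S is the pushout of S <- R -> S in commutative rings; by its
   universal property, alpha (x) 1 = 1 (x) alpha iff every pair of ring maps
   S -> T agreeing on R agrees on alpha. *)
Definition strict_closure (A : comUnitRingType) (R S : A -> Prop) (alpha : A) : Prop :=
  S alpha /\
  forall (T : comPzRingType) (f g : A -> T),
    rhom_on S f -> rhom_on S g -> (forall r, R r -> f r = g r) -> f alpha = g alpha.

(* Main.v *)
Require Import Defs.
From HB Require Import structures.
From mathcomp Require Import all_boot all_order all_algebra.
From Stdlib Require Import ClassicalEpsilon.
From mathcomp Require Import ring.
Import Order.TTheory GRing.Theory Num.Theory.
Local Open Scope ring_scope.
Section Gen.
Context {k : fieldType} {Q : comUnitAlgType k}.

Definition evm (a b : Q) : {rmorphism {poly {poly k}} -> Q} :=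
  (horner_eval b) \o (map_poly (horner_alg a)).

Lemma evmE a b P : evalXY a b P = evm a b P. Proof. by []. Qed.
Lemma evm_def a b P : evm a b P = (map_poly (horner_alg a) P).[b]. Proof. by []. Qed.

Lemma evmC a b c : evm a b c%:P = horner_alg a c.
Proof. by rewrite evm_def map_polyC hornerC. Qed.
Lemma evmX a b : evm a b 'X = b.
Proof. by rewrite evm_def map_polyX hornerX. Qed.
Lemma evmXC a b : evm a b ('X%:P) = a.
Proof. by rewrite evmC horner_algX. Qed.

Lemma size_map_poly_le (R1 R2 : nzRingType) (f : {rmorphism R1 -> R2}) (p : {poly R1}) :
  (size (map_poly f p) <= size p)%N.
Proof. by rewrite map_polyE (leq_trans (size_Poly _)) // size_map. Qed.

Lemma evm_sum a b (P : {poly {poly k}}) N : (size P <= N)%N ->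
  evm a b P = \sum_(i < N) horner_alg a P`_i * b ^+ i.
Proof.
move=> hN; rewrite evm_def (horner_coef_wide _ (leq_trans (@size_map_poly_le _ _ _ P) hN)).
by apply: eq_bigr => i _; rewrite coef_map.
Qed.

Lemma evm_comp a b (P W : {poly {poly k}}) : evm a b (P \Po W) = evm a (evm a b W) P.
Proof. by rewrite !evm_def map_comp_poly horner_comp. Qed.
End Gen.
Section QP.
Variable R : comNzRingType.
Lemma in_qpoly_Xn m (p : {poly R}) : (0 < m)%N ->
  (in_qpoly ('X^m) p : {poly R}) = take_poly m p.
Proof.
move=> hm; rewrite /in_qpoly /= mk_monic_Xn prednK //.
by rewrite Pdiv.RingMonic.take_poly_rmodp.
Qed.
Lemma in_qpoly_Xn_self m : (0 < m)%N -> in_qpoly ('X^m) ('X^m : {poly R}) = 0.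
Proof.
move=> hm; apply: val_inj.
have -> : val (in_qpoly ('X^m) ('X^m : {poly R})) = take_poly m 'X^m by exact: in_qpoly_Xn.
apply/polyP => i.
rewrite coef_take_poly coefXn coef0; case: ltnP => // h.
by case: eqP => // ei; rewrite ei ltnn in h.
Qed.
End QP.
Section Main.
Variables (k : fieldType) (Q : comUnitAlgType k) (x y : Q) (l n : nat).
Hypothesis hl : (3 <= l)%N.
Hypothesis hker : forall P : {poly {poly k}},
            evalXY x y P = 0 <-> exists P0 : {poly {poly k}}, P = P0 * 'X^l.
Hypothesis hQ : is_total_quotient_ring (gen2 x y).
Hypothesis hn : (0 < n)%N.

Let z := y / x ^+ n.

Lemma l_gt0 : (0 < l)%N. Proof. exact: leq_trans hl. Qed.
Lemma l_gt1 : (1 < l)%N. Proof. exact: leq_trans hl. Qed.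

Lemma take0_eq (P : {poly {poly k}}) m : (forall j, (j < m)%N -> P`_j = 0) ->
  P = drop_poly m P * 'X^m.
Proof.
move=> H; rewrite -{1}(poly_take_drop m P).
suff -> : take_poly m P = 0 by rewrite add0r.
apply/polyP => j; rewrite coef_take_poly coef0; case: ifP => // hj; exact: H.
Qed.

Lemma ker_low (P : {poly {poly k}}) : evm x y P = 0 -> forall j, (j < l)%N -> P`_j = 0.
Proof. by move=> /(hker P).1 [P0 ->] j hj; rewrite coefMXn hj. Qed.

Lemma low_ker (P : {poly {poly k}}) : (forall j, (j < l)%N -> P`_j = 0) -> evm x y P = 0.
Proof. by move=> H; apply/(hker P).2; exists (drop_poly l P); apply: take0_eq. Qed.

Lemma x_unit : x \is a GRing.unit.
Proof.
apply: hQ.1; split; first by exists ('X%:P); rewrite evmE evmXC.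
move=> r [P <-]; rewrite evmE => h0.
apply: low_ker => j hj.
have := @ker_low ('X%:P * P) _ j hj.
rewrite rmorphM evmXC h0 => /(_ erefl).
rewrite coefCM => /eqP; rewrite mulf_eq0 polyX_eq0 /= => /eqP //.
Qed.

Lemma yl : y ^+ l = 0.
Proof.
have := (hker 'X^l).2 (ex_intro _ 1 (esym (mul1r _))).
by rewrite evmE rmorphXn evmX.
Qed.

Lemma hyz : y = x ^+ n * z.
Proof. by rewrite /z mulrC divrK // unitrX // x_unit. Qed.

Lemma zl : z ^+ l = 0.
Proof. by rewrite /z exprMn yl mul0r. Qed.

Lemma zpow_big i : (l <= i)%N -> z ^+ i = 0.
Proof. by move=> h; rewrite -(subnKC h) exprD zl mul0r. Qed.

Lemma ident i : (0 < i)%N -> y ^+ i / x ^+ ((i - 1) * n) = y * z ^+ (i - 1).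
Proof.
case: i => // i _; rewrite subn1 /= (mulnC i) exprM /z exprMn exprVn exprS mulrA //.
Qed.

Lemma ident2 i : (0 < i)%N -> y ^+ i / x ^+ ((i - 1) * n) = x ^+ n * z ^+ i.
Proof.
move=> hi; rewrite ident // hyz -mulrA -exprS subn1 prednK //.
Qed.

Lemma kerz (P : {poly {poly k}}) : evm x z P = 0 -> forall j, (j < l)%N -> P`_j = 0.
Proof.
move=> h0 j hj.
set N := size P.
have [hjN|hjN] := ltnP j N; last by rewrite nth_default.
pose P' := \poly_(i < N) (P`_i * 'X^(n * (N - i))).
have hev : evm x y P' = x ^+ (n * N) * evm x z P.
  rewrite (@evm_sum _ _ x y P' N (size_poly _ _)) (@evm_sum _ _ x z P N (leqnn N)) mulr_sumr.
  apply: eq_bigr => i _; rewrite coef_poly ltn_ord rmorphM rmorphXn /= horner_algX.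
  rewrite hyz exprMn -!exprM.
  have -> : (n * N = n * (N - i) + n * i)%N by rewrite -mulnDr subnK // ltnW.
  rewrite exprD; ring.
have := @ker_low P' _ j hj; rewrite hev h0 mulr0 => /(_ erefl).
rewrite coef_poly hjN => /eqP; rewrite mulf_eq0 expf_eq0 polyX_eq0 andbF orbF.
by move/eqP.
Qed.


Lemma evz_comp (P : {poly {poly k}}) :
  evm x z (P \Po ('X^n%:P * 'X)) = evm x y P.
Proof. by rewrite evm_comp rmorphM evmX evmC rmorphXn /= horner_algX -hyz. Qed.

Lemma R_S q : gen2 x y q -> gen2 x z q.
Proof. by case=> P <-; exists (P \Po ('X^n%:P * 'X)); rewrite !evmE evz_comp. Qed.

Lemma S_int q : gen2 x z q -> integral_over (gen2 x y) q.
Proof.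
case=> P <-; rewrite evmE.
set c := P`_0.
have [W hW] : exists W, P - c%:P = W * ('X - 0%:P).
  by apply/factor_theorem; rewrite rootE !hornerE horner_coef0 subrr.
exists (map_poly (evm x y) (('X - (c%:P)%:P) ^+ l)).
split; first by rewrite rmorphXn /= map_polyXsubC monic_exp // monicXsubC.
split; first by move=> i; rewrite coef_map; eexists; reflexivity.
rewrite /root rmorphXn /= map_polyXsubC horner_exp hornerXsubC.
have -> : evm x z P - evm x y c%:P = evm x z W * z.
  by rewrite evmC -(evmC x z) -rmorphB hW rmorphM rmorphB evmX evmC rmorph0 subr0.
by rewrite exprMn zl mulr0.
Qed.

Definition Sz := gen2 x z.
Lemma S0 : Sz 0. Proof. by exists 0; rewrite evmE rmorph0. Qed.
Lemma S1 : Sz 1. Proof. by exists 1; rewrite evmE rmorph1. Qed.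
Lemma SD a b : Sz a -> Sz b -> Sz (a + b).
Proof. by case=> Pa <- [Pb <-]; exists (Pa + Pb); rewrite !evmE rmorphD. Qed.
Lemma SM a b : Sz a -> Sz b -> Sz (a * b).
Proof. by case=> Pa <- [Pb <-]; exists (Pa * Pb); rewrite !evmE rmorphM. Qed.
Lemma Szz : Sz z. Proof. by exists 'X; rewrite evmE evmX. Qed.
Lemma Sy : Sz y. Proof. by apply: R_S; exists 'X; rewrite evmE evmX. Qed.
Lemma SX a i : Sz a -> Sz (a ^+ i).
Proof. by move=> ha; elim: i => [|i IH]; [rewrite expr0; exact: S1 | rewrite exprS; apply: SM]. Qed.
Lemma Sphi p : Sz (horner_alg x p). Proof. by exists p%:P; rewrite evmE evmC. Qed.
Lemma Ssum (I : Type) (r : seq I) (F : I -> Q) :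
  (forall i, Sz (F i)) -> Sz (\sum_(i <- r) F i).
Proof.
move=> hF; elim: r => [|a r IH]; first by rewrite big_nil; exact: S0.
by rewrite big_cons; apply: SD.
Qed.

Section F.
Variables (T : comPzRingType) (f : Q -> T).
Hypothesis hf : rhom_on Sz f.
Lemma f0 : f 0 = 0.
Proof.
have h := (hf.2 0 0 S0 S0).1.
by apply: (@addrI _ (f 0)); rewrite addr0 -h addr0.
Qed.
Lemma fD a b : Sz a -> Sz b -> f (a + b) = f a + f b.
Proof. by move=> ha hb; exact: (hf.2 a b ha hb).1. Qed.
Lemma fM a b : Sz a -> Sz b -> f (a * b) = f a * f b.
Proof. by move=> ha hb; exact: (hf.2 a b ha hb).2. Qed.
Lemma fsum (I : Type) (r : seq I) (F : I -> Q) :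
  (forall i, Sz (F i)) -> f (\sum_(i <- r) F i) = \sum_(i <- r) f (F i).
Proof.
move=> hF; elim: r => [|a r IH]; first by rewrite !big_nil f0.
by rewrite !big_cons fD ?IH //; apply: Ssum.
Qed.
Lemma fX a i : Sz a -> f (a ^+ i) = f a ^+ i.
Proof.
move=> ha; elim: i => [|i IH]; first by rewrite !expr0 hf.1.
by rewrite !exprS fM ?IH //; apply: SX.
Qed.
End F.

Lemma key (T : comPzRingType) (f g : Q -> T) :
  rhom_on Sz f -> rhom_on Sz g -> (forall r, gen2 x y r -> f r = g r) ->
  forall c, gen2 x y c -> forall i, f (c * y * z ^+ i) = g (c * y * z ^+ i).
Proof.
move=> hf hg hfg c hc i.
have Sc : Sz c by apply: R_S.
have Ry : gen2 x y y by exists 'X; rewrite evmE evmX.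
have Rxn : gen2 x y (x ^+ n) by exists ('X^n)%:P; rewrite evmE evmC rmorphXn /= horner_algX.
have Sxn : Sz (x ^+ n) by apply: R_S.
have Kyz : f y * f z = g y * g z.
  have e1 : f y = f (x ^+ n) * f z by rewrite {1}hyz fM //; exact: Szz.
  have e2 : g y = g (x ^+ n) * g z by rewrite {1}hyz fM //; exact: Szz.
  have -> : f y * f z = (f (x ^+ n) * f z) * g z.
    by rewrite {1}(hfg y Ry) e2 -(hfg _ Rxn); ring.
  by rewrite -e1 (hfg y Ry).
have hyz2 : g y * f z = g y * g z by rewrite -Kyz (hfg y Ry).
have Hi : f y * f z ^+ i = g y * g z ^+ i.
  elim: i => [|i IH]; first by rewrite !expr0 !mulr1 hfg.
  rewrite !exprSr !mulrA IH.
  have -> : g y * g z ^+ i * f z = (g y * f z) * g z ^+ i by ring.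
  by rewrite hyz2; ring.
have Szi : Sz (z ^+ i) := SX z i Szz.
rewrite (@fM _ f hf _ _ (SM _ _ Sc Sy) Szi) (@fM _ f hf _ _ Sc Sy) (@fX _ f hf _ i Szz).
rewrite (@fM _ g hg _ _ (SM _ _ Sc Sy) Szi) (@fM _ g hg _ _ Sc Sy) (@fX _ g hg _ i Szz).
by rewrite -mulrA Hi (hfg c hc) mulrA.
Qed.


Lemma strict_back q : (exists r, gen2 x y r /\ exists d : nat -> {poly k},
       q = r + \sum_(2 <= i < l) (map_poly (in_alg Q) (d i)).[x] * y ^+ i / x ^+ ((i - 1) * n))
  -> strict_closure (gen2 x y) Sz q.
Proof.
case=> r [hr [d ->]].
have E : \sum_(2 <= i < l) (map_poly (in_alg Q) (d i)).[x] * y ^+ i / x ^+ ((i - 1) * n)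
   = \sum_(2 <= i < l) horner_alg x (d i) * y * z ^+ (i - 1).
  apply: eq_big_nat => i /andP [h2 _]; rewrite -mulrA ident ?mulrA //; exact: ltnW h2.
rewrite E.
have hS : forall i, Sz (horner_alg x (d i) * y * z ^+ (i - 1)).
  move=> i; apply: SM; [apply: SM; [exact: Sphi | exact: Sy] | apply: SX; exact: Szz].
split; first by apply: SD; [exact: R_S | exact: Ssum].
move=> T f g hf hg hfg.
rewrite (@fD _ f hf _ _ (R_S _ hr) (Ssum _ _ _ hS)) (@fD _ g hg _ _ (R_S _ hr) (Ssum _ _ _ hS)).
rewrite (@fsum _ f hf _ _ _ hS) (@fsum _ g hg _ _ _ hS) (hfg r hr); congr (_ + _).
apply: eq_bigr => i _; apply: key => //; by exists (d i)%:P; rewrite evmE evmC.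
Qed.

Local Notation A1 := {poly %/ ('X^n : {poly k})}.
Local Notation TT := {poly %/ ('X^l : {poly A1})}.
Definition theta : {rmorphism {poly {poly k}} -> TT} :=
  (in_qpoly ('X^l : {poly A1})) \o (map_poly (in_qpoly ('X^n : {poly k}))).
Lemma theta_def P : theta P =
  in_qpoly ('X^l : {poly A1}) (map_poly (in_qpoly ('X^n : {poly k})) P).
Proof. by []. Qed.
Definition theta0 : {rmorphism {poly {poly k}} -> TT} := theta \o (polyC \o horner_eval 0).
Lemma theta0_def P : theta0 P = theta (P.[0])%:P.
Proof. by []. Qed.

Lemma theta_C : theta ('X^n)%:P = 0.
Proof.
have h0 : in_qpoly ('X^n : {poly k}) ('X^n) = 0 := in_qpoly_Xn_self _ _ hn.
by rewrite theta_def map_polyC /= h0 polyC0 rmorph0.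
Qed.

Lemma theta_val P j : (j < l)%N ->
  ((theta P : {poly A1})`_j : {poly k}) = take_poly n (P`_j).
Proof.
move=> hj; rewrite theta_def in_qpoly_Xn ?l_gt0 // coef_take_poly hj coef_map.
by rewrite in_qpoly_Xn.
Qed.

Lemma theta_kill P : evm x z P = 0 -> theta P = 0.
Proof.
move=> h; rewrite (take0_eq P l (kerz P h)) rmorphM [theta 'X^l]theta_def map_polyXn.
by rewrite in_qpoly_Xn_self ?mulr0 // l_gt0.
Qed.

Lemma theta0_kill P : evm x z P = 0 -> theta0 P = 0.
Proof. by move=> h; rewrite theta0_def horner_coef0 (kerz P h 0 l_gt0) polyC0 rmorph0. Qed.

Definition eps (q : Q) : {poly {poly k}} :=
  epsilon (inhabits 0) (fun P => evm x z P = q).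
Lemma eps_spec P : evm x z (eps (evm x z P)) = evm x z P.
Proof.
by apply: (epsilon_spec (inhabits 0) (fun P' => evm x z P' = evm x z P)); exists P.
Qed.

Lemma rhomF (F : {rmorphism {poly {poly k}} -> TT}) :
  (forall P, evm x z P = 0 -> F P = 0) ->
  (forall P, F (eps (evm x z P)) = F P) /\ rhom_on Sz (fun q => F (eps q)).
Proof.
move=> hF.
have FE : forall P, F (eps (evm x z P)) = F P.
  move=> P; apply/eqP; rewrite -subr_eq0 -rmorphB; apply/eqP; apply: hF.
  by rewrite rmorphB eps_spec subrr.
split=> //; split; first by rewrite -(rmorph1 (evm x z)) FE rmorph1.
move=> a b [Pa <-] [Pb <-]; rewrite !evmE.
split; [rewrite -(rmorphD (evm x z)) !FE rmorphD | rewrite -(rmorphM (evm x z)) !FE rmorphM] => //.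
Qed.

Lemma agree P1 : theta (P1 \Po ('X^n%:P * 'X)) = theta0 (P1 \Po ('X^n%:P * 'X)).
Proof.
rewrite theta0_def horner_comp hornerM hornerC hornerX mulr0.
have [W hW] : exists W, P1 - (P1.[0])%:P = W * ('X - 0%:P).
  by apply/factor_theorem; rewrite rootE !hornerE subrr.
rewrite -{1}(subrK (P1.[0])%:P P1) hW polyC0 subr0 comp_polyD comp_polyM comp_polyX comp_polyC.
by rewrite rmorphD !rmorphM theta_C mul0r mulr0 add0r.
Qed.

Lemma coef_div P : theta P = theta0 P -> forall j, (0 < j)%N -> (j < l)%N ->
  P`_j = drop_poly n P`_j * 'X^n.
Proof.
move=> h j hj0 hjl.
have ht : ((theta P : {poly A1})`_j : {poly k}) =
    ((theta ((P.[0])%:P) : {poly A1})`_j : {poly k}) by rewrite -theta0_def h.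
rewrite !theta_val // coefC (gtn_eqF hj0) take_poly0r in ht.
by rewrite -{1}(poly_take_drop n (P`_j)) ht add0r.
Qed.

Lemma strict_dir q : strict_closure (gen2 x y) Sz q -> exists r, gen2 x y r /\
  exists d : nat -> {poly k},
       q = r + \sum_(2 <= i < l) (map_poly (in_alg Q) (d i)).[x] * y ^+ i / x ^+ ((i - 1) * n).
Proof.
case=> [[P <-] hcl].
have [FE hF] := rhomF _ theta_kill.
have [FE0 hF0] := rhomF _ theta0_kill.
have hagree : forall r, gen2 x y r -> theta (eps r) = theta0 (eps r).
  move=> r [P1 <-]; rewrite evmE -evz_comp FE FE0; exact: agree.
have := hcl _ _ _ hF hF0 hagree; rewrite evmE FE FE0 => hP.
have hdiv := coef_div _ hP.
exists (horner_alg x P`_0 + horner_alg x (drop_poly n P`_1) * y).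
split; first by exists ((P`_0)%:P + (drop_poly n P`_1)%:P * 'X); rewrite evmE rmorphD rmorphM !evmC evmX.
exists (fun i => drop_poly n P`_i).
rewrite (@evm_sum _ _ x z P (maxn (size P) l) (leq_maxl _ _)).
rewrite -(big_mkord xpredT (fun i => horner_alg x P`_i * z ^+ i)).
rewrite (big_cat_nat (leq0n l) (leq_maxr _ _)) /=.
have -> : \sum_(l <= i < maxn (size P) l) horner_alg x P`_i * z ^+ i = 0.
  rewrite big_nat_cond big1 // => i /andP [/andP [hi _] _].
  by rewrite zpow_big // mulr0.
rewrite addr0.
rewrite big_ltn ?l_gt0 // big_ltn ?l_gt1 //.
rewrite expr0 mulr1 expr1 addrA.
congr (_ + _ + _).
  by rewrite {1}(hdiv 1 erefl l_gt1) rmorphM rmorphXn /= horner_algX -mulrA -hyz.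
apply: eq_big_nat => i /andP [h2 hi].
rewrite {1}(hdiv i (ltnW h2) hi) rmorphM rmorphXn /= horner_algX.
by rewrite -[in RHS]mulrA ident2 ?mulrA //; exact: ltnW h2.
Qed.

Lemma main_sec : let R := gen2 x y in
  let z := y / x ^+ n in
  let S := gen2 x z in
  (forall q, R q -> S q) /\
  (forall q, S q -> integral_over R q) /\
  (forall q, strict_closure R S q <->
     exists r, R r /\ exists d : nat -> {poly k},
       q = r + \sum_(2 <= i < l) (map_poly (in_alg Q) (d i)).[x] * y ^+ i / x ^+ ((i - 1) * n)).
Proof.
move=> R z' S.
split; first exact: R_S.
split; first exact: S_int.
move=> q; split; first exact: strict_dir.
exact: strict_back.
Qed.

End Main.

Theorem mainTheorem9 (k : fieldType) (Q : comUnitAlgType k) (x y : Q) (l : nat)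
  (hl : (3 <= l)%N)
  (hker : forall P : {poly {poly k}},
            evalXY x y P = 0 <-> exists P0 : {poly {poly k}}, P = P0 * 'X^l)
  (hQ : is_total_quotient_ring (gen2 x y))
  (n : nat) (hn : (0 < n)%N) :
  let R := gen2 x y in
  let z := y / x ^+ n in
  let S := gen2 x z in
  (forall q, R q -> S q) /\
  (forall q, S q -> integral_over R q) /\
  (forall q, strict_closure R S q <->
     exists r, R r /\ exists d : nat -> {poly k},
       q = r + \sum_(2 <= i < l) (map_poly (in_alg Q) (d i)).[x] * y ^+ i / x ^+ ((i - 1) * n)).
Proof. exact: (@main_sec k Q x y l n hl hker hQ hn). Qed.
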